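(* Let $v_0\in\mathbb{R}^n$ be a unit vector, $\tau>0$, $\epsilon\ge 0$, and let $\mathbf{A}$ be any $n\times n\times n$ tensor with slices $A_i\in\mathbb{R}^{n\times n}$, $(A_i)_{jk}=\mathbf{A}_{ijk}$. Let $\mathbf{T}=\tau v_0^{\otimes 3}+\mathbf{A}$ with slices $T_i$. Let $w\in\mathbb{R}^{n^2}$ be the vector flattening of $\mathrm{Id}_{n\times n}$ (so $w_{(j,k)}=\delta_{jk}$). Suppose $\|\sum_i A_i\otimes A_i-n\,ww^T\|\le \epsilon\tau^2$ and $\|\sum_i v_0(i)A_i\|\le \epsilon\tau$. Then any top left or right singular vector $v'$ of $M:=\sum_i T_i\otimes T_i-n\,ww^T$ satisfies $\langle v',v_0\otimes v_0\rangle^2\ge 1-O(\epsilon)$.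
   Context: Norms of matrices are operator norms. The Kronecker product $A\otimes B$ is indexed by pairs: $(A\otimes B)[(j,k),(j',k')]=A_{jj'}B_{kk'}$. Note $n\,ww^T=\mathbb{E}\sum_i A_i\otimes A_i$ when $\mathbf{A}$ has i.i.d. standard Gaussian entries. *)

(* Defs.v *)
(* Vectors are functions on finite index types; an
   n^2 x n^2 matrix is a function on pairs ('I_n * 'I_n), which matches the
   pair-indexing convention of the Kronecker product in the paper. *)
From HB Require Import structures.
From mathcomp Require Import all_boot all_order all_algebra.
Set Implicit Arguments. Unset Strict Implicit. Unset Printing Implicit Defensive.
Import Order.TTheory GRing.Theory Num.Theory.
Local Open Scope ring_scope.

Section Defs.
Variable R : rcfType.

Definition sqnorm (I : finType) (x : I -> R) : R := \sum_(i : I) x i ^+ 2.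

Definition mvmul (I J : finType) (X : I -> J -> R) (x : J -> R) : I -> R :=
  fun i => \sum_(j : J) X i j * x j.

Definition trans (I J : finType) (X : I -> J -> R) : J -> I -> R :=
  fun j i => X i j.

(* operator norm of X is at most c (c >= 0): ||X x|| <= c ||x|| for all x,
   written with squares *)
Definition opnorm_le (I J : finType) (X : I -> J -> R) (c : R) : Prop :=
  forall x : J -> R, sqnorm (mvmul X x) <= c ^+ 2 * sqnorm x.

Definition top_right_sv (I J : finType) (X : I -> J -> R) (v : J -> R) : Prop :=
  sqnorm v = 1 /\ forall x : J -> R, sqnorm (mvmul X x) <= sqnorm (mvmul X v) * sqnorm x.

Definition top_left_sv (I J : finType) (X : I -> J -> R) (u : I -> R) : Prop :=
  top_right_sv (trans X) u.

Definition slice n (A : 'I_n -> 'I_n -> 'I_n -> R) (i : 'I_n) : 'M[R]_n :=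
  \matrix_(j, k) A i j k.

Definition kron n (A B : 'M[R]_n) : ('I_n * 'I_n) -> ('I_n * 'I_n) -> R :=
  fun p q => A p.1 q.1 * B p.2 q.2.

Definition wId n : ('I_n * 'I_n) -> R := fun p => if p.1 == p.2 then 1 else 0.

Definition spiked n (tau : R) (v0 : 'I_n -> R) (A : 'I_n -> 'I_n -> 'I_n -> R) :
  'I_n -> 'I_n -> 'I_n -> R :=
  fun i j k => tau * v0 i * v0 j * v0 k + A i j k.

Definition kronSumCentered n (T : 'I_n -> 'I_n -> 'I_n -> R) :
  ('I_n * 'I_n) -> ('I_n * 'I_n) -> R :=
  fun p q => \sum_(i < n) kron (slice T i) (slice T i) p q - n%:R * wId p * wId q.

Definition vtens n (v : 'I_n -> R) : ('I_n * 'I_n) -> R := fun p => v p.1 * v p.2.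

Definition vcontract n (v : 'I_n -> R) (A : 'I_n -> 'I_n -> 'I_n -> R) : 'M[R]_n :=
  \sum_(i < n) v i *: slice A i.

Definition inner (I : finType) (x y : I -> R) : R := \sum_(i : I) x i * y i.

End Defs.

(* Main.v *)
Require Import Defs.
From HB Require Import structures.
From mathcomp Require Import all_boot all_order all_algebra.
From mathcomp Require Import ring lra.
Import Order.TTheory GRing.Theory Num.Theory.
Local Open Scope ring_scope.
Set Implicit Arguments. Unset Strict Implicit.

Section H.
Variable R : rcfType.

Definition nrm (I : finType) (x : I -> R) := Num.sqrt (sqnorm x).

Lemma sqnorm_ge0 (I : finType) (x : I -> R) : 0 <= sqnorm x.
Proof. by apply: sumr_ge0 => i _; rewrite sqr_ge0. Qed.

Lemma sqnorm_sqrt (I : finType) (x : I -> R) : nrm x ^+ 2 = sqnorm x.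
Proof. by rewrite /nrm sqr_sqrtr // sqnorm_ge0. Qed.

Lemma nrm_ge0 (I : finType) (x : I -> R) : 0 <= nrm x.
Proof. exact: sqrtr_ge0. Qed.

Lemma sq_expand (I : finType) (x y : I -> R) a b :
  \sum_i (a * y i - b * x i) ^+ 2 =
  a ^+ 2 * sqnorm y + (- (2 * a * b)) * inner x y + b ^+ 2 * sqnorm x.
Proof.
rewrite (eq_bigr (fun i => a^+2 * y i^+2 + (-(2*a*b)) * (x i * y i) + b^+2 * x i^+2)); last by move=> i _; ring.
by rewrite !big_split /= -!mulr_sumr.
Qed.

Lemma CS2 (I : finType) (x y : I -> R) : inner x y ^+ 2 <= sqnorm x * sqnorm y.
Proof.
have key : 0 <= \sum_i (sqnorm x * y i - inner x y * x i) ^+ 2 by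
  apply: sumr_ge0 => i _; rewrite sqr_ge0.
rewrite sq_expand in key.
have [x0|xpos] := eqVneq (sqnorm x) 0.
  have hx : forall i, x i = 0.
    move=> i; move/eqP: x0; rewrite psumr_eq0 => [/allP H|j _]; last by rewrite sqr_ge0.
    by have := H i (mem_index_enum i); rewrite sqrf_eq0 => /eqP.
  have -> : inner x y = 0 by rewrite /inner big1 // => i _; rewrite hx mul0r.
  by rewrite x0 expr0n /= mul0r.
have xp : 0 < sqnorm x by rewrite lt_def xpos sqnorm_ge0.
move: key; set X := sqnorm x; set Y := sqnorm y; set P := inner x y => key.
have : 0 <= X * (X * Y - P ^+ 2).
  have -> : X * (X * Y - P ^+ 2) = X ^+ 2 * Y + - (2 * X * P) * P + P ^+ 2 * X by ring.
  exact: key.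
by rewrite pmulr_rge0 // subr_ge0.
Qed.

Lemma CS (I : finType) (x y : I -> R) : `|inner x y| <= nrm x * nrm y.
Proof.
by rewrite -sqrtr_sqr /nrm -sqrtrM ?sqnorm_ge0 // ler_sqrt ?CS2 // mulr_ge0 // sqnorm_ge0.
Qed.

Definition bil (I J : finType) (y : I -> R) (X : I -> J -> R) (x : J -> R) :=
  \sum_i \sum_j y i * X i j * x j.

Lemma bil_inner (I J : finType) (y : I -> R) (X : I -> J -> R) x :
  inner y (mvmul X x) = bil y X x.
Proof.
rewrite /inner /bil /mvmul; apply: eq_bigr => i _; rewrite mulr_sumr.
by apply: eq_bigr => j _; rewrite mulrA.
Qed.

Lemma inner_sq (I : finType) (x : I -> R) : inner x x = sqnorm x.
Proof. by apply: eq_bigr => i _; rewrite expr2. Qed.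

Lemma innerC (I : finType) (x y : I -> R) : inner x y = inner y x.
Proof. by apply: eq_bigr => i _; rewrite mulrC. Qed.

Lemma opnorm_nrm (I J : finType) (X : I -> J -> R) c x :
  0 <= c -> opnorm_le X c -> nrm (mvmul X x) <= c * nrm x.
Proof.
move=> c0 H; rewrite /nrm -(ger0_norm c0) -sqrtr_sqr -sqrtrM ?sqr_ge0 //.
by rewrite ler_sqrt ?H // mulr_ge0 ?sqr_ge0 ?sqnorm_ge0.
Qed.

Lemma opnorm_bil (I J : finType) (X : I -> J -> R) c y x :
  0 <= c -> opnorm_le X c -> `|bil y X x| <= c * nrm y * nrm x.
Proof.
move=> c0 H; rewrite -bil_inner (le_trans (CS _ _)) //.
rewrite (mulrC c) -mulrA ler_wpM2l ?nrm_ge0 //; exact: opnorm_nrm.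
Qed.

Lemma bil_trans (I J : finType) (X : I -> J -> R) y x :
  bil y (trans X) x = bil x X y.
Proof.
rewrite /bil exchange_big; apply: eq_bigr => i _; apply: eq_bigr => j _.
rewrite /trans; ring.
Qed.

Lemma bil_decomp (I : finType) (X N : I -> I -> R) (u : I -> R) k y x :
  (forall p q, X p q = k * u p * u q + N p q) ->
  bil y X x = k * inner y u * inner u x + bil y N x.
Proof.
move=> HX; rewrite /bil /inner -mulrA big_distrlr mulr_sumr -big_split /=; apply: eq_bigr => i _.
rewrite mulr_sumr -big_split /=; apply: eq_bigr => j _.
rewrite HX; ring.
Qed.

Lemma main_gen (I : finType) (X N : I -> I -> R) (u v : I -> R) k d :
  0 < k -> 0 <= d -> sqnorm u = 1 ->
  (forall p q, X p q = k * u p * u q + N p q) ->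
  (forall y x, `|bil y N x| <= d * nrm y * nrm x) ->
  top_right_sv X v ->
  k - d <= k * `|inner v u| + d.
Proof.
move=> k0 d0 u1 HX HN [v1 Htop].
have nu : nrm u = 1 by rewrite /nrm u1 sqrtr1.
have nv : nrm v = 1 by rewrite /nrm v1 sqrtr1.
set w := mvmul X v; set m := nrm w.
have m0 : 0 <= m by exact: nrm_ge0.
have h1 : nrm (mvmul X u) <= m.
  have := Htop u; rewrite u1 mulr1 -/w => H.
  by rewrite /nrm /m ler_sqrt // sqnorm_ge0.
have h2 : k - d <= m.
  apply: le_trans h1.
  have := CS u (mvmul X u); rewrite nu mul1r bil_inner (bil_decomp _ _ HX).
  rewrite inner_sq u1 !mulr1 => H.
  have := HN u u; rewrite nu !mulr1 => H2.
  have := ler_norml (bil u N u) d; rewrite H2 => /esym /andP [H3 _].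
  apply: le_trans (ler_normlW H). by rewrite lerD2l.
have h3 : m * m <= m * (k * `|inner v u| + d).
  have E : m * m = bil w X v by rewrite -bil_inner inner_sq -sqnorm_sqrt expr2.
  rewrite E (bil_decomp _ _ HX).
  have := HN w v; rewrite nv mulr1 -/m => H2.
  have := CS w u; rewrite nu mulr1 -/m => H4.
  apply: le_trans (ler_normlW (ler_normD _ _)) _.
  rewrite mulrDr; apply: lerD; last by rewrite mulrC.
  rewrite normrM normrM (ger0_norm (ltW k0)) (innerC u v).
  rewrite mulrAC (mulrC m) ler_wpM2l // mulr_ge0 ?normr_ge0 ?ltW //.
have [m_eq0|m_pos] := eqVneq m 0.
  rewrite m_eq0 in h2; apply: le_trans h2 _.
  by rewrite addr_ge0 // mulr_ge0 ?normr_ge0 ?ltW.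
have mp : 0 < m by rewrite lt_def m_pos m0.
apply: le_trans h2 _; by rewrite -(ler_pM2l mp).
Qed.

Lemma pairsum (I J : finType) (f : I * J -> R) :
  \sum_p f p = \sum_i \sum_j f (i, j).
Proof. by rewrite (pair_bigA _ (fun i j => f (i, j))); apply: eq_bigr => -[]. Qed.

Lemma bil_pair (I J : finType) (y x : I * J -> R) (F : I * J -> I * J -> R) :
  bil y F x = \sum_i \sum_j \sum_l \sum_k y (i, j) * F (i, j) (l, k) * x (l, k).
Proof.
rewrite /bil pairsum; apply: eq_bigr => i _; apply: eq_bigr => j _.
by rewrite pairsum.
Qed.

Lemma sqnorm_pair (I J : finType) (y : I * J -> R) :
  sqnorm y = \sum_i \sum_j y (i, j) ^+ 2.
Proof. by rewrite /sqnorm pairsum. Qed.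

Lemma nrm_le (I J : finType) (a : I -> R) (b : J -> R) : sqnorm a <= sqnorm b -> nrm a <= nrm b.
Proof. by move=> h; rewrite /nrm ler_sqrt // sqnorm_ge0. Qed.

Variable n : nat.
Implicit Types (v : 'I_n -> R) (B : 'I_n -> 'I_n -> R) (y x : 'I_n * 'I_n -> R).

Definition contr1 v y : 'I_n -> R := fun j => \sum_i y (i, j) * v i.
Definition contr2 v y : 'I_n -> R := fun i => \sum_j y (i, j) * v j.

Lemma contr1_le v y : sqnorm v = 1 -> sqnorm (contr1 v y) <= sqnorm y.
Proof.
move=> v1; rewrite sqnorm_pair exchange_big; apply: ler_sum => j _.
have := CS2 (fun i => y (i, j)) v; rewrite v1 mulr1 => H; exact: H.
Qed.

Lemma contr2_le v y : sqnorm v = 1 -> sqnorm (contr2 v y) <= sqnorm y.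
Proof.
move=> v1; rewrite sqnorm_pair; apply: ler_sum => i _.
have := CS2 (fun j => y (i, j)) v; rewrite v1 mulr1 => H; exact: H.
Qed.

Lemma bilF1 v B y x :
  bil y (fun p q => v p.1 * v q.1 * B p.2 q.2) x = bil (contr1 v y) B (contr1 v x).
Proof.
rewrite bil_pair /bil /contr1.
transitivity (\sum_j \sum_k \sum_i \sum_l y (i, j) * v i * B j k * (x (l, k) * v l)).
  rewrite exchange_big; apply: eq_bigr => j _.
  rewrite [RHS]exchange_big; apply: eq_bigr => i _.
  rewrite exchange_big; apply: eq_bigr => l _; apply: eq_bigr => k _ /=; ring.
apply: eq_bigr => j _; apply: eq_bigr => k _.
rewrite mulr_suml mulr_suml; apply: eq_bigr => i _.
by rewrite mulr_sumr.
Qed.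

Lemma bilF2 v B y x :
  bil y (fun p q => B p.1 q.1 * v p.2 * v q.2) x = bil (contr2 v y) B (contr2 v x).
Proof.
rewrite bil_pair /bil /contr2.
transitivity (\sum_i \sum_l \sum_j \sum_k y (i, j) * v j * B i l * (x (l, k) * v k)).
  apply: eq_bigr => i _; rewrite exchange_big; apply: eq_bigr => l _.
  apply: eq_bigr => j _; apply: eq_bigr => k _ /=; ring.
apply: eq_bigr => i _; apply: eq_bigr => l _.
rewrite mulr_suml mulr_suml; apply: eq_bigr => j _.
by rewrite mulr_sumr.
Qed.

Lemma bilF1_bound v B c y x : sqnorm v = 1 -> 0 <= c -> opnorm_le B c ->
  `|bil y (fun p q => v p.1 * v q.1 * B p.2 q.2) x| <= c * nrm y * nrm x.
Proof.
move=> v1 c0 HB; rewrite bilF1 (le_trans (opnorm_bil _ _ c0 HB)) //.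
rewrite -mulrA -mulrA ler_wpM2l // ler_pM ?nrm_ge0 //; apply: nrm_le; exact: contr1_le.
Qed.

Lemma bilF2_bound v B c y x : sqnorm v = 1 -> 0 <= c -> opnorm_le B c ->
  `|bil y (fun p q => B p.1 q.1 * v p.2 * v q.2) x| <= c * nrm y * nrm x.
Proof.
move=> v1 c0 HB; rewrite bilF2 (le_trans (opnorm_bil _ _ c0 HB)) //.
rewrite -mulrA -mulrA ler_wpM2l // ler_pM ?nrm_ge0 //; apply: nrm_le; exact: contr2_le.
Qed.

Lemma vtens_sq v : sqnorm v = 1 -> sqnorm (vtens v) = 1.
Proof.
move=> v1; rewrite sqnorm_pair /vtens /=.
rewrite -[RHS]v1; apply: eq_bigr => i _.
under eq_bigr => j _ do rewrite exprMn.
by rewrite -mulr_sumr -/(sqnorm v) v1 mulr1.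
Qed.

Lemma vcontractE v (A : 'I_n -> 'I_n -> 'I_n -> R) j k :
  vcontract v A j k = \sum_i v i * A i j k.
Proof.
rewrite /vcontract summxE; apply: eq_bigr => i _; by rewrite !mxE.
Qed.

Lemma decomp v (A : 'I_n -> 'I_n -> 'I_n -> R) tau p q :
  sqnorm v = 1 ->
  kronSumCentered (spiked tau v A) p q =
  tau ^+ 2 * vtens v p * vtens v q +
  (tau * (v p.1 * v q.1 * vcontract v A p.2 q.2 +
          vcontract v A p.1 q.1 * v p.2 * v q.2) + kronSumCentered A p q).
Proof.
move=> v1; rewrite /kronSumCentered /kron /slice /spiked !vcontractE /vtens.
under eq_bigr => i _ do rewrite !mxE.
under [X in _ = _ + (_ + (X - _))]eq_bigr => i _ do rewrite !mxE.
rewrite (eq_bigr (fun i => tau^+2 * (v p.1 * v q.1 * v p.2 * v q.2) * v i ^+ 2 +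
   tau * (v p.1 * v q.1) * (v i * A i p.2 q.2) +
   tau * (v p.2 * v q.2) * (v i * A i p.1 q.1) + A i p.1 q.1 * A i p.2 q.2));
  last by move=> i _; ring.
rewrite !big_split /= -!mulr_sumr -/(sqnorm v) v1; ring.
Qed.

Lemma bil_lin (I J : finType) (F G H : I -> J -> R) (a : R) (y : I -> R) (x : J -> R) :
  bil y (fun p q => a * (F p q + G p q) + H p q) x =
  a * (bil y F x + bil y G x) + bil y H x.
Proof.
rewrite /bil.
transitivity (\sum_i \sum_j (a * (y i * F i j * x j) + a * (y i * G i j * x j) + y i * H i j * x j)).
  by apply: eq_bigr => i _; apply: eq_bigr => j _; ring.
rewrite mulrDr !mulr_sumr -!big_split /=; apply: eq_bigr => i _.
by rewrite !big_split /= !mulr_sumr.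
Qed.

Lemma final_arith (t e b : R) : 0 < t -> 0 <= e -> 0 <= b ->
  t ^+ 2 - 3 * e * t ^+ 2 <= t ^+ 2 * b + 3 * e * t ^+ 2 ->
  1 - 12 * e <= b ^+ 2.
Proof.
move=> t0 e0 b0 H.
have t2 : 0 < t ^+ 2 by rewrite exprn_gt0.
have hb : 1 - 6 * e <= b.
  rewrite -(ler_pM2l t2).
  have -> : t ^+ 2 * (1 - 6 * e) = (t ^+ 2 - 3 * e * t ^+ 2) - 3 * e * t ^+ 2 by ring.
  rewrite lerBlDr; apply: le_trans H _; rewrite le_eqVlt; apply/orP; left; apply/eqP; ring.
have [h|h] := lerP 0 (1 - 6 * e); nra.
Qed.
End H.

Theorem mainTheorem5 (R : rcfType) :
  exists C : R, 0 < C /\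
  forall (n : nat) (v0 : 'I_n -> R) (tau eps : R)
         (A : 'I_n -> 'I_n -> 'I_n -> R) (v' : ('I_n * 'I_n) -> R),
    sqnorm v0 = 1 -> 0 < tau -> 0 <= eps ->
    opnorm_le (kronSumCentered A) (eps * tau ^+ 2) ->
    opnorm_le (fun j k => vcontract v0 A j k) (eps * tau) ->
    (top_left_sv (kronSumCentered (spiked tau v0 A)) v' \/
     top_right_sv (kronSumCentered (spiked tau v0 A)) v') ->
    1 - C * eps <= (inner v' (vtens v0)) ^+ 2.
Proof.
exists 12; split => // n v0 tau eps A v' v1 t0 e0 HE HB Hsv.
set M := kronSumCentered (spiked tau v0 A).
set u := vtens v0.
set Bc := fun j k => vcontract v0 A j k.
set N := fun p q : 'I_n * 'I_n => tau * (v0 p.1 * v0 q.1 * Bc p.2 q.2 +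
          Bc p.1 q.1 * v0 p.2 * v0 q.2) + kronSumCentered A p q.
have HM : forall p q, M p q = tau ^+ 2 * u p * u q + N p q.
  by move=> p q; rewrite /M decomp.
have u1 : sqnorm u = 1 by exact: vtens_sq.
have et0 : 0 <= eps * tau by rewrite mulr_ge0 // ltW.
have et20 : 0 <= eps * tau ^+ 2 by rewrite mulr_ge0 // ?exprn_ge0 // ltW.
have d0 : 0 <= 3 * eps * tau ^+ 2 by rewrite -mulrA mulr_ge0.
have HN : forall y x, `|bil y N x| <= 3 * eps * tau ^+ 2 * nrm y * nrm x.
  move=> y x; rewrite /N bil_lin.
  have h1 := bilF1_bound y x v1 et0 HB.
  have h2 := bilF2_bound y x v1 et0 HB.
  have h3 := opnorm_bil y x et20 HE.
  set b1 := bil y _ x in h1 *; set b2 := bil y _ x in h2 *; set b3 := bil y _ x in h3 *.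
  have hn := mulr_ge0 (nrm_ge0 y) (nrm_ge0 x).
  apply: (le_trans (ler_normD _ _)).
  rewrite normrM (gtr0_norm t0).
  have := ler_normD b1 b2.
  move: h1 h2 h3 hn; set Y := nrm y; set X := nrm x => h1 h2 h3 hn h12.
  nra.
have fin : tau ^+ 2 - 3 * eps * tau ^+ 2 <=
           tau ^+ 2 * `|inner v' u| + 3 * eps * tau ^+ 2.
  case: Hsv => [Hl|Hr].
  - apply: (main_gen (N := trans N) _ d0 u1 _ _ Hl).
    + by rewrite exprn_gt0.
    + by move=> p q; rewrite /trans; transitivity (M q p) => //; rewrite HM; ring.
    + by move=> y x; rewrite bil_trans (le_trans (HN _ _)) // mulrAC.
  - apply: (main_gen _ d0 u1 HM HN Hr).
    by rewrite exprn_gt0.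
rewrite -real_normK ?num_real //; apply: (final_arith t0 e0 (normr_ge0 _) fin).
Qed.
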